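(* Let $(Q,f)$ be a triangulation quiver with at least three vertices. The following are equivalent: (i) $(Q,f)$ is the tetrahedral triangulation quiver; (ii) $n_\alpha=3$ for every arrow $\alpha\in Q_1$; (iii) $g^3$ is the identity on $Q_1$; (iv) there is an arrow $\beta\in Q_1$ with $n_\beta=n_{\bar\beta}=n_{f(\beta)}=n_{f(\bar\beta)}=3$.
   Context: A triangulation quiver is $(Q,f)$ with $Q$ a finite connected quiver, each vertex the source and target of exactly two arrows, and $f$ a permutation of $Q_1$ with $s(f(\alpha))=t(\alpha)$ and $f^3=\mathrm{id}$. For $\alpha\in Q_1$, $\bar\alpha$ is the other arrow with source $s(\alpha)$, $g(\alpha)=\overline{f(\alpha)}$, and $n_\alpha$ is the size of the $g$-orbit of $\alpha$. The tetrahedral triangulation quiver has vertices $1,\dots,6$, arrows $\alpha:3\to1,\beta:4\to2,\gamma:4\to1,\delta:1\to5,\varepsilon:2\to5,\eta:5\to4,\xi:5\to3,\varrho:2\to6,\sigma:3\to2,\mu:6\to3,\nu:1\to6,\omega:6\to4$ and $f$-orbits $(\alpha\,\nu\,\mu),(\beta\,\varrho\,\omega),(\gamma\,\delta\,\eta),(\varepsilon\,\xi\,\sigma)$; (i) means isomorphic to it as a quiver with permutation. *)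

(* Defs.v *)
From mathcomp Require Import all_boot all_fingroup.
Set Implicit Arguments. Unset Strict Implicit. Unset Printing Implicit Defensive.

Section TQ.
Variables (V A : finType) (s t : A -> V) (f : {perm A}).

Definition qadj : rel V :=
  fun u v => [exists a, ((s a == u) && (t a == v)) || ((s a == v) && (t a == u))].

Definition quiver_connected : Prop := forall u v : V, connect qadj u v.

Definition is_triangulation_quiver : Prop :=
  [/\ quiver_connected,
      forall v : V, #|[set a | s a == v]| = 2,
      forall v : V, #|[set a | t a == v]| = 2,
      forall a : A, s (f a) = t a
    & forall a : A, f (f (f a)) = a].

Definition qbar (a : A) : A := odflt a [pick b | (s b == s a) && (b != a)].

Definition qg (a : A) : A := qbar (f a).

Definition nq (a : A) : nat := fingraph.order qg a.
End TQ.

(* The tetrahedral triangulation quiver.  Vertex k (1..6) is the ordinal k-1;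
   arrows alpha,beta,gamma,delta,eps,eta,xi,rho,sigma,mu,nu,omega are 0..11. *)
Definition tetra_src (a : 'I_12) : 'I_6 :=
  inord (nth 0 [:: 2; 3; 3; 0; 1; 4; 4; 1; 2; 5; 0; 5] a).
Definition tetra_tgt (a : 'I_12) : 'I_6 :=
  inord (nth 0 [:: 0; 1; 0; 4; 4; 3; 2; 5; 1; 2; 5; 3] a).
Definition tetra_f (a : 'I_12) : 'I_12 :=
  inord (nth 0 [:: 10; 7; 3; 5; 6; 2; 8; 11; 4; 0; 9; 1] a).

Definition is_tetrahedral (V A : finType) (s t : A -> V) (f : {perm A}) : Prop :=
  exists (phiV : V -> 'I_6) (phiA : A -> 'I_12),
    [/\ bijective phiV, bijective phiA,
        forall a, tetra_src (phiA a) = phiV (s a),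
        forall a, tetra_tgt (phiA a) = phiV (t a)
      & forall a, tetra_f (phiA a) = phiA (f a)].

(* Main.v *)
Require Import Defs.
From mathcomp Require Import all_boot all_fingroup.
Set Implicit Arguments. Unset Strict Implicit. Unset Printing Implicit Defensive.

Section Basic.
Variables (V A : finType) (s t : A -> V) (f : {perm A}).
Hypothesis tq : is_triangulation_quiver s t f.

Lemma out_del1 a : #|[set x | s x == s a] :\ a| = 1.
Proof.
case: tq => _ h2 _ _ _.
have := cardsD1 a [set x | s x == s a]; rewrite h2 inE eqxx /=.
by case.
Qed.

Lemma qbar_spec a : s (qbar s a) = s a /\ qbar s a != a.
Proof.
rewrite /qbar; case: pickP => [b /andP[/eqP -> ->] //|/= H].
have := out_del1 a; move/eqP/cards1P => [x Hx].
have : x \in [set x0 | s x0 == s a] :\ a by rewrite Hx set11.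
by rewrite !inE => /andP[xa sx]; have := H x; rewrite sx xa.
Qed.

Lemma qbar_uniq a c : s c = s a -> c = a \/ c = qbar s a.
Proof.
move=> sc; case: (eqVneq c a) => [->|ca]; first by left.
right; have := out_del1 a; move/eqP/cards1P => [x Hx].
have [sb ba] := qbar_spec a.
have : c \in [set x0 | s x0 == s a] :\ a by rewrite !inE ca sc eqxx.
have : qbar s a \in [set x0 | s x0 == s a] :\ a by rewrite !inE ba sb eqxx.
by rewrite Hx !inE => /eqP -> /eqP ->.
Qed.

Lemma qbarK a : qbar s (qbar s a) = a.
Proof.
have [sb ba] := qbar_spec a; have [sbb bba] := qbar_spec (qbar s a).
case: (@qbar_uniq a (qbar s (qbar s a))) => //; first by rewrite sbb.
by move=> e; rewrite e eqxx in bba.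
Qed.

Lemma fK3 a : f (f (f a)) = a. Proof. by case: tq. Qed.
Lemma sf a : s (f a) = t a. Proof. by case: tq. Qed.

Lemma qg_inj : injective (qg s f).
Proof. by move=> x y; rewrite /qg => /(can_inj qbarK) /perm_inj. Qed.

Definition fN (n : nat) := nth 0 [:: 10; 7; 3; 5; 6; 2; 8; 11; 4; 0; 9; 1] n.
Definition barN (n : nat) := nth 0 [:: 8; 2; 1; 10; 7; 6; 5; 4; 0; 11; 3; 9] n.
Definition srcN (n : nat) := nth 0 [:: 2; 3; 3; 0; 1; 4; 4; 1; 2; 5; 0; 5] n.
Definition tgtN (n : nat) := nth 0 [:: 0; 1; 0; 4; 4; 3; 2; 5; 1; 2; 5; 3] n.
Definition gN n := barN (fN n).

Lemma all12 (P : pred nat) : all P (iota 0 12) -> forall k, k < 12 -> P k.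
Proof. by move/allP=> H k k12; apply: H; rewrite mem_iota. Qed.

Lemma fN_lt k : fN k < 12.
Proof. by rewrite /fN; elim: k => // -[|[|[|[|[|[|[|[|[|[|[|[|k]]]]]]]]]]]]. Qed.
Lemma barN_lt k : barN k < 12.
Proof. by rewrite /barN; elim: k => // -[|[|[|[|[|[|[|[|[|[|[|[|k]]]]]]]]]]]]. Qed.
Lemma gN_lt k : gN k < 12. Proof. exact: barN_lt. Qed.

Lemma gN3 k : k < 12 -> gN (gN (gN k)) = k.
Proof. by move=> k12; apply/eqP; move: k k12; apply: all12. Qed.
Lemma gN_uniq k : k < 12 -> uniq [:: k; gN k; gN (gN k)].
Proof. by move: k; apply: all12. Qed.
Lemma barN_src k : k < 12 -> srcN (barN k) = srcN k.
Proof. by move=> k12; apply/eqP; move: k k12; apply: all12. Qed.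
Lemma barN_neq k : k < 12 -> barN k != k.
Proof. by move: k; apply: all12. Qed.

Definition equiv (psi : nat -> A) :=
  [/\ forall i j, i < 12 -> j < 12 -> psi i = psi j -> i = j,
      forall k, k < 12 -> f (psi k) = psi (fN k)
    & forall k, k < 12 -> qbar s (psi k) = psi (barN k)].

Lemma equiv_g psi k : equiv psi -> k < 12 -> qg s f (psi k) = psi (gN k).
Proof. by case=> _ Hf Hb k12; rewrite /qg Hf // Hb // fN_lt. Qed.

Lemma equiv_order psi k : equiv psi -> k < 12 -> nq s f (psi k) = 3.
Proof.
move=> E k12; rewrite /nq.
have -> : 3 = size [:: psi k; psi (gN k); psi (gN (gN k))] by [].
apply: order_cycle; last by rewrite mem_head.
  by rewrite /= !equiv_g ?gN_lt // gN3 // !eqxx.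
have -> : [:: psi k; psi (gN k); psi (gN (gN k))] = map psi [:: k; gN k; gN (gN k)] by [].
rewrite map_inj_in_uniq ?gN_uniq //.
case: E => I _ _ x y; rewrite !inE => Hx Hy; apply: I.
  by case/or3P: Hx => /eqP -> //; rewrite gN_lt.
by case/or3P: Hy => /eqP -> //; rewrite gN_lt.
Qed.

Lemma equiv_g3 psi k : equiv psi -> k < 12 -> qg s f (qg s f (qg s f (psi k))) = psi k.
Proof. by move=> E k12; rewrite !equiv_g ?gN_lt // gN3. Qed.

Lemma tetra_equiv : is_tetrahedral s t f ->
  exists psi, equiv psi /\ forall a, exists2 k, k < 12 & psi k = a.
Proof.
case=> phiV [phiA [[pV pVK pVK'] [psi pAK pAK'] Hs Ht Hf]].
have psi_inj : injective psi by apply: (can_inj pAK').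
have Hs' k : phiV (s (psi k)) = tetra_src k by rewrite -Hs pAK'.
have inj12 i j : i < 12 -> j < 12 -> (inord i : 'I_12) = inord j -> i = j.
  by move=> i12 j12 /(congr1 val); rewrite /= !inordK.
exists (fun n => psi (inord n)); split; last first.
  by move=> a; exists (phiA a) => //; rewrite inord_val pAK.
split.
- by move=> i j i12 j12 /psi_inj; apply: inj12.
- move=> k k12; rewrite -[f _]pAK -Hf pAK'.
  by congr psi; apply/val_inj; rewrite /= /tetra_f !inordK // -/(fN k) fN_lt.
move=> k k12.
have sb : s (psi (inord (barN k))) = s (psi (inord k)).
  rewrite -(pVK (s (psi _))) Hs' -[RHS](pVK (s (psi _))) Hs'; congr pV.
  by rewrite /tetra_src (inordK (barN_lt k)) (inordK k12) -/(srcN _) -/(srcN k) barN_src.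
case: (qbar_uniq sb) => [/psi_inj /(inj12 _ _ (barN_lt k) k12) e|->]; last by [].
by have := barN_neq k12; rewrite e eqxx.
Qed.

Lemma card_A2 : #|A| = #|V| * 2.
Proof.
case: tq => _ h2 _ _ _.
rewrite -sum1_card (partition_big s xpredT) //= -sum_nat_const.
apply: eq_bigr => v _; rewrite -(h2 v) -sum1_card; by apply: eq_bigl => a; rewrite inE.
Qed.

Definition stepN (c : bool) n := if c then gN n else fN n.
Definition applyN (w : seq bool) n := foldl (fun n c => stepN c n) n w.
Definition stepA (c : bool) a := if c then qg s f a else f a.
Definition applyA (w : seq bool) a := foldl (fun a c => stepA c a) a w.

Definition from0 (n : nat) : seq bool := nth [::] [:: [::]; [:: false; true; false]; [:: false; true; true]; [:: true]; [:: false; false; true; false]; [:: true; false]; [:: true; true]; [:: false; false; true; true]; [:: false; false; true]; [:: false; false]; [:: false]; [:: false; true]] n.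
Definition to0 (n : nat) : seq bool := nth [::] [:: [::]; [:: false; true; false]; [:: false; true; true]; [:: true; true]; [:: false; true]; [:: false; false; true; true]; [:: true]; [:: true; false]; [:: false; false; true]; [:: false]; [:: false; false]; [:: false; false; true; false]] n.
Definition rhoN i j y := applyN (to0 i ++ from0 y) j.
Definition canonN i j y := minn y (minn (rhoN i j y) (rhoN i j (rhoN i j y))).

Lemma C1 i y : i < 12 -> y < 12 -> applyN (to0 i ++ from0 y) i = y.
Proof.
move=> i12 y12; apply/eqP.
have : all (fun i => all (fun y => applyN (to0 i ++ from0 y) i == y) (iota 0 12)) (iota 0 12)
  by vm_compute.
by move/allP/(_ i); rewrite mem_iota i12 => /(_ isT)/allP/(_ y); rewrite mem_iota y12 => /(_ isT).
Qed.

Lemma C2 i j : i < 12 -> j < 12 -> i != j ->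
  has (fun y => rhoN i j y == barN y) (iota 0 12) ||
  (size (undup (map (canonN i j) (iota 0 12))) <= 5).
Proof.
move=> i12 j12; apply/implyP.
have : all (fun i => all (fun j => (i != j) ==> (has (fun y => rhoN i j y == barN y) (iota 0 12) ||
  (size (undup (map (canonN i j) (iota 0 12))) <= 5))) (iota 0 12)) (iota 0 12)
  by vm_compute.
by move/allP/(_ i); rewrite mem_iota i12 => /(_ isT)/allP/(_ j); rewrite mem_iota j12 => /(_ isT).
Qed.

Lemma stepN_lt c n : n < 12 -> stepN c n < 12.
Proof. by case: c => _; rewrite /stepN ?gN_lt ?fN_lt. Qed.
Lemma applyN_lt w n : n < 12 -> applyN w n < 12.
Proof. by elim: w n => //= c w IH n n12; apply: IH; apply: stepN_lt. Qed.

Section Core.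
Variable b : A.
Local Notation g := (qg s f).
Local Notation bb := (qbar s b).
Hypothesis H1 : g (g (g b)) = b.
Hypothesis H2 : g (g (g bb)) = bb.
Hypothesis H3 : g (g (g (f b))) = f b.
Hypothesis H4 : g (g (g (f bb))) = f bb.
Hypothesis V3 : 3 <= #|V|.

Definition psiN n := nth b [:: b; g (g (f bb)); g (g (f b)); g b; f bb; g (f bb);
   g (g b); g bb; bb; g (g bb); f b; g (f b)] n.

Lemma fg x : f x = qbar s (g x). Proof. by rewrite /qg qbarK. Qed.

Lemma E1 : qbar s (g (g b)) = g (f bb).
Proof. have e : f (g (g b)) = bb by rewrite fg H1. by rewrite -[g (g b)]fK3 e. Qed.
Lemma E2 : qbar s (g (g bb)) = g (f b).
Proof. have e : f (g (g bb)) = b by rewrite fg H2 qbarK. by rewrite -[g (g bb)]fK3 e. Qed.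
Lemma E3 : qbar s (g (g (f b))) = g (g (f bb)).
Proof.
have e : f (g (g (f b))) = g b by rewrite fg H3.
by rewrite -[g (g (f b))]fK3 e {1}/qg [f (g b)]fg E1.
Qed.

Lemma psi_bar k : k < 12 -> qbar s (psiN k) = psiN (barN k).
Proof.
case: k => [|[|[|[|[|[|[|[|[|[|[|[|k]]]]]]]]]]]] // _; rewrite /psiN /=;
 try done; try by rewrite qbarK.
- by rewrite -E3 qbarK.
- exact: E3.
- by rewrite -E1 qbarK.
- exact: E1.
- exact: E2.
- by rewrite -E2 qbarK.
Qed.

Lemma psi_g k : k < 12 -> g (psiN k) = psiN (gN k).
Proof.
case: k => [|[|[|[|[|[|[|[|[|[|[|[|k]]]]]]]]]]]] // _; rewrite /psiN /=;
 by rewrite ?H1 ?H2 ?H3 ?H4.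
Qed.

Lemma psi_f k : k < 12 -> f (psiN k) = psiN (fN k).
Proof.
move=> k12; rewrite fg psi_g // psi_bar ?gN_lt //; congr psiN.
by apply/eqP; move: k k12; apply: all12.
Qed.


Lemma psi_word w k : k < 12 -> psiN (applyN w k) = applyA w (psiN k).
Proof.
elim: w k => //= c w IH k k12; rewrite IH; last exact: stepN_lt.
by case: c; rewrite /stepN /stepA ?psi_g ?psi_f.
Qed.

Lemma src_in a k : k < 12 -> s a = s (psiN k) -> exists2 m, m < 12 & psiN m = a.
Proof.
move=> k12 e; case: (qbar_uniq e) => ->; first by exists k.
by exists (barN k); rewrite ?barN_lt ?psi_bar.
Qed.

Lemma qsym : symmetric (qadj s t).
Proof.
move=> u v; rewrite /qadj; apply/existsP/existsP => -[a H]; exists a; by rewrite orbC.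
Qed.

Lemma psi_surj a : exists2 k, k < 12 & psiN k = a.
Proof.
pose VS := [pred v | [exists k : 'I_12, s (psiN k) == v]].
have cl : closed (qadj s t) VS.
  apply: (intro_closed (sym_connect_sym qsym)) => u v /existsP [x H] /existsP [k /eqP ek].
  apply/existsP; case/orP: H => /andP [/eqP sa /eqP ta].
    have [m m12 em] := src_in (ltn_ord k) (etrans sa (esym ek)).
    by exists (Ordinal (fN_lt m)); rewrite /= -psi_f // em sf ta.
  have [m m12 em] := src_in (ltn_ord k) (etrans (sf x) (etrans ta (esym ek))).
  exists (Ordinal (fN_lt (fN m))); rewrite /= -!psi_f ?fN_lt // em fK3 //.
  by rewrite sa.
have : s a \in VS.
  case: tq => conn _ _ _ _.
  rewrite -(closed_connect cl (conn (s (psiN 0)) (s a))).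
  by apply/existsP; exists ord0.
by case/existsP => k /eqP ek; apply: (src_in (ltn_ord k)); rewrite ek.
Qed.

Lemma minn_eq x y : minn x y = x \/ minn x y = y.
Proof. by rewrite /minn; case: ifP; [left|right]. Qed.

Lemma psi_inj i j : i < 12 -> j < 12 -> psiN i = psiN j -> i = j.
Proof.
move=> i12 j12 e; apply/eqP; apply: contraT => ij.
have R y : y < 12 -> psiN y = psiN (rhoN i j y).
  by move=> y12; rewrite -{1}(C1 i12 y12) /rhoN !psi_word // e.
have Rlt y : rhoN i j y < 12 by apply: applyN_lt.
case/orP: (C2 i12 j12 ij) => [/hasP [y] | Hs].
  rewrite mem_iota => /andP[_ y12] /eqP r.
  have := qbar_spec (psiN y); rewrite psi_bar // -r -R // eqxx.
  by case.
have Hc y : y < 12 -> psiN (canonN i j y) = psiN y.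
  move=> y12; rewrite /canonN.
  have e1 := R y y12; have e2 := R _ (Rlt y).
  case: (minn_eq y (minn (rhoN i j y) (rhoN i j (rhoN i j y)))) => -> //.
  by case: (minn_eq (rhoN i j y) (rhoN i j (rhoN i j y))) => ->; rewrite -?e2 -?e1.
set L := map psiN (undup (map (canonN i j) (iota 0 12))).
have : #|A| <= #|L|.
  apply: subset_leq_card; apply/subsetP => a _.
  have [k k12 <-] := psi_surj a; rewrite -Hc //.
  by apply: map_f; rewrite mem_undup; apply: map_f; rewrite mem_iota.
move/leq_trans/(_ (card_size L)); rewrite size_map => /leq_trans/(_ Hs).
by rewrite card_A2; move: V3; case: #|V| => [|[|[|n]]].
Qed.


Definition repN (n : nat) := nth 0 [:: 3; 4; 0; 1; 5; 9] n.
Definition psiVN n := s (psiN (repN n)).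
Definition phiA (a : A) : 'I_12 := odflt ord0 [pick k : 'I_12 | psiN k == a].
Definition phiV (v : V) : 'I_6 := odflt ord0 [pick u : 'I_6 | psiVN u == v].
Lemma all6 (P : pred nat) : all P (iota 0 6) -> forall k, k < 6 -> P k.
Proof. by move/allP=> H k k6; apply: H; rewrite mem_iota. Qed.

Lemma repN_lt n : n < 6 -> repN n < 12.
Proof. by move: n; apply: all6. Qed.
Lemma srcN_lt k : k < 12 -> srcN k < 6.
Proof. by move: k; apply: all12. Qed.
Lemma srcN_rep n : n < 6 -> srcN (repN n) = n.
Proof. by move=> n6; apply/eqP; move: n n6; apply: all6. Qed.
Lemma rep_src k : k < 12 -> (repN (srcN k) == k) || (repN (srcN k) == barN k).
Proof. by move: k; apply: all12. Qed.
Lemma srcN_f k : k < 12 -> srcN (fN k) = tgtN k.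
Proof. by move=> k12; apply/eqP; move: k k12; apply: all12. Qed.

Lemma s_psi k : k < 12 -> s (psiN k) = psiVN (srcN k).
Proof.
move=> k12; rewrite /psiVN; case/orP: (rep_src k12) => /eqP -> //.
by rewrite -psi_bar //; case: (qbar_spec (psiN k)).
Qed.

Lemma psiVN_inj u w : u < 6 -> w < 6 -> psiVN u = psiVN w -> u = w.
Proof.
move=> u6 w6 e; rewrite -(srcN_rep u6) -(srcN_rep w6).
case: (qbar_uniq (esym e)) => [/psi_inj -> //|]; rewrite ?repN_lt //.
rewrite psi_bar ?repN_lt // => /psi_inj -> //; rewrite ?barN_lt ?repN_lt //.
by rewrite barN_src ?repN_lt.
Qed.

Lemma phiA_psi n : n < 12 -> phiA (psiN n) = inord n.
Proof.
move=> n12; rewrite /phiA; case: pickP => [k /eqP /psi_inj e|H].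
  by apply/val_inj; rewrite /= inordK // e.
by have := H (inord n); rewrite /= inordK // eqxx.
Qed.
Lemma psi_phiA a : psiN (phiA a) = a.
Proof.
rewrite /phiA; case: pickP => [k /eqP //|H].
have [k k12 ek] := psi_surj a.
by have := H (Ordinal k12); rewrite /= ek eqxx.
Qed.
Lemma phiV_psi n : n < 6 -> phiV (psiVN n) = inord n.
Proof.
move=> n6; rewrite /phiV; case: pickP => [k /eqP /psiVN_inj e|H].
  by apply/val_inj; rewrite /= inordK // e.
by have := H (inord n); rewrite /= inordK // eqxx.
Qed.
Lemma psiV_surj v : exists2 n, n < 6 & psiVN n = v.
Proof.
have : #|[set a | s a == v]| > 0 by case: tq => _ h2 _ _ _; rewrite h2.
case/card_gt0P => a; rewrite inE => /eqP <-.
have [k k12 <-] := psi_surj a.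
by exists (srcN k); rewrite ?srcN_lt ?s_psi.
Qed.
Lemma psi_phiV v : psiVN (phiV v) = v.
Proof.
rewrite /phiV; case: pickP => [k /eqP //|H].
have [k k6 ek] := psiV_surj v.
by have := H (Ordinal k6); rewrite /= ek eqxx.
Qed.

Lemma core_tetra : is_tetrahedral s t f.
Proof.
exists phiV, phiA; split.
- exists (fun u : 'I_6 => psiVN u) => [v|u]; first exact: psi_phiV.
  by rewrite phiV_psi // inord_val.
- exists (fun k : 'I_12 => psiN k) => [a|k]; first exact: psi_phiA.
  by rewrite phiA_psi // inord_val.
- by move=> a; rewrite -{2}(psi_phiA a) s_psi // phiV_psi ?srcN_lt.
- move=> a; rewrite -{2}(psi_phiA a) -sf psi_f // s_psi ?fN_lt // phiV_psi ?srcN_lt ?fN_lt //.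
  by rewrite srcN_f.
- by move=> a; rewrite -{2}(psi_phiA a) psi_f // phiA_psi ?fN_lt.
Qed.

End Core.
End Basic.

Unset Implicit Arguments.
Theorem lemma6p6 (V A : finType) (s t : A -> V) (f : {perm A}) :
  is_triangulation_quiver s t f -> 3 <= #|V| ->
  [/\ is_tetrahedral s t f <-> (forall a : A, nq s f a = 3),
      is_tetrahedral s t f <-> (forall a : A, qg s f (qg s f (qg s f a)) = a)
    & is_tetrahedral s t f <->
      (exists b : A, [/\ nq s f b = 3, nq s f (qbar s b) = 3,
                         nq s f (f b) = 3 & nq s f (f (qbar s b)) = 3])].
Proof.
move=> tq V3.
have tall : is_tetrahedral s t f ->
    (forall a, nq s f a = 3) /\ (forall a, qg s f (qg s f (qg s f a)) = a).
  case/(tetra_equiv tq) => psi [E surj]; split => a; have [k k12 <-] := surj a.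
    exact: equiv_order.
  exact: equiv_g3.
have nq3 a : nq s f a = 3 -> qg s f (qg s f (qg s f a)) = a.
  by rewrite /nq => e; have := iter_order (qg_inj tq) a; rewrite e.
have [b0 _] : exists b : A, true.
  have : 0 < #|V| by case: #|V| V3.
  case/card_gt0P => v _.
  have : #|[set a | s a == v]| > 0 by case: tq => _ h2 _ _ _; rewrite h2.
  by case/card_gt0P => a _; exists a.
split; split.
- by case/tall.
- by move=> H; apply: (core_tetra tq (b := b0)); rewrite // nq3.
- by case/tall.
- by move=> H; apply: (core_tetra tq (b := b0)).
- by case/tall => H _; exists b0; rewrite !H.
- by case=> b [h1 h2 h3 h4]; apply: (core_tetra tq (b := b)); rewrite // nq3.
Qed.
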